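(* Let $k,m \in \mathbb{N}$, and let $G$ be an ordered graph with irreducible block decomposition $(G_1, \ldots, G_m)$. If $|\{i \in [m] : G_i \notin \mathcal{J}\}| \geqslant k$, then $S_n(G) \geqslant 2^{n-1}$ for every $n \leqslant k$.
   Context: Ordered graphs of order $n$ have vertex set $[n]$ with the natural order. A pair of vertices $u<v$ separates the edges of $G$ if every edge $ij$ ($i<j$) has $j\leqslant u$ or $v\leqslant i$; $G$ is irreducible if no pair separates its edges. $G_1+\dots+G_m$ places copies of $G_1,\dots,G_m$ consecutively from left to right with no edges between copies; every ordered graph is uniquely $G_1+\dots+G_m$ with all $G_i$ irreducible, and $(G_1,\dots,G_m)$ is its irreducible block decomposition. $S_n(G)$ is the number of distinct (non-isomorphic as ordered graphs) induced ordered subgraphs of $G$ of order $n$. For $n\in\mathbb{N}$: $J^{(n)}_1=K_n$; $J^{(n)}_2$ on $[n]$ with edge set $\{1n\}$ if $n\geqslant 2$ (empty if $n=1$); $J^{(n)}_3$ on $[n]$ with edges $\{1i: 2\leqslant i\leqslant n\}$; $J^{(n)}_4$ on $[n]$ with edges $\{in: 1\leqslant i\leqslant n-1\}$; $L^{(n)}$ on $[n]$ with edges $\{i(i+1)\}$; $Q_1$ on $[4]$ with edges $\{13,24\}$; $Q_2$ on $[4]$ with edges $\{14,23\}$. $\mathcal{J}$ is the set of all $J^{(n)}_i$, $L^{(n)}$ ($n\in\mathbb{N}$, $i\in[4]$), $Q_1$, $Q_2$. *)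

(* Defs.v *)
From mathcomp Require Import all_boot.
Set Implicit Arguments. Unset Strict Implicit. Unset Printing Implicit Defensive.

(* An ordered graph of order [ord] has vertex set {0, ..., ord-1} (0-indexed
   version of [ord] = {1,...,ord}) with the natural order.  Its edge set is
   { ij : i < j < ord, adj i j }; values of [adj] outside i < j < ord are
   irrelevant. *)
Record ograph := OGraph { ord : nat; adj : nat -> nat -> bool }.

Definition is_edge (G : ograph) (i j : nat) : bool :=
  [&& i < j, j < ord G & adj G i j].

Definition oiso (G H : ograph) : bool :=
  (ord G == ord H) &&
  [forall i : 'I_(ord G), forall j : 'I_(ord G),
     (i < j) ==> (adj G i j == adj H i j)].

Definition separates (G : ograph) (u v : nat) : bool :=
  [forall i : 'I_(ord G), forall j : 'I_(ord G),
     is_edge G i j ==> ((j <= u) || (v <= i))].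

Definition irreducible (G : ograph) : bool :=
  ~~ [exists u : 'I_(ord G), exists v : 'I_(ord G),
        (u < v) && separates G u v].

Definition osum2 (G H : ograph) : ograph :=
  OGraph (ord G + ord H)
    (fun i j => if j < ord G then adj G i j
                else if ord G <= i then adj H (i - ord G) (j - ord G)
                else false).

Definition oempty : ograph := OGraph 0 (fun _ _ => false).

Definition osum (bs : seq ograph) : ograph := foldr osum2 oempty bs.

Definition block_decomposition (G : ograph) (bs : seq ograph) : bool :=
  all irreducible bs && oiso G (osum bs).

Definition J1 (n : nat) : ograph := OGraph n (fun i j => true).
Definition J2 (n : nat) : ograph := OGraph n (fun i j => (i == 0) && (j == n.-1)).
Definition J3 (n : nat) : ograph := OGraph n (fun i j => i == 0).
Definition J4 (n : nat) : ograph := OGraph n (fun i j => j == n.-1).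
Definition Lpath (n : nat) : ograph := OGraph n (fun i j => j == i.+1).
Definition Q1 : ograph :=
  OGraph 4 (fun i j => ((i == 0) && (j == 2)) || ((i == 1) && (j == 3))).
Definition Q2 : ograph :=
  OGraph 4 (fun i j => ((i == 0) && (j == 3)) || ((i == 1) && (j == 2))).

(* G is (isomorphic to) a member of J.  Isomorphism forces equal orders, so
   n ranging over 0..ord G covers every member that could match. *)
Definition inJ (G : ograph) : bool :=
  [exists n : 'I_(ord G).+1,
     [|| oiso G (J1 n), oiso G (J2 n), oiso G (J3 n), oiso G (J4 n)
       | oiso G (Lpath n)]]
  || oiso G Q1 || oiso G Q2.

Definition sorted_verts (N : nat) (S : {set 'I_N}) : seq nat :=
  [seq val x | x <- enum S].

(* The induced ordered subgraph on S, relabelled to {0,...,n-1} preserving the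
   order, encoded by its (upper-triangular) edge indicator.  Two induced
   subgraphs of order n are isomorphic as ordered graphs iff these codes
   coincide. *)
Definition induced_code (G : ograph) (n : nat) (S : {set 'I_(ord G)})
  : {ffun 'I_n -> {ffun 'I_n -> bool}} :=
  [ffun i : 'I_n => [ffun j : 'I_n =>
     (i < j) && adj G (nth 0 (sorted_verts S) i) (nth 0 (sorted_verts S) j)]].

Definition Sn (n : nat) (G : ograph) : nat :=
  #|[set induced_code n S | S in [set S : {set 'I_(ord G)} | #|S| == n]]|.

(* Main.v *)
Require Import Defs.
From mathcomp Require Import all_boot zify.
From Stdlib Require Import Classical.
Set Implicit Arguments. Unset Strict Implicit. Unset Printing Implicit Defensive.

Definition code n := {ffun 'I_n -> {ffun 'I_n -> bool}}.
Definition mkcode n (f : nat -> nat -> bool) : code n :=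
  [ffun i : 'I_n => [ffun j : 'I_n => f i j]].
Definition gcode (G : ograph) (s : seq nat) i k :=
  (i < k) && adj G (nth 0 s i) (nth 0 s k).

Lemma induced_codeE G n (S : {set 'I_(ord G)}) :
  induced_code n S = mkcode n (gcode G (sorted_verts S)).
Proof. by []. Qed.

Lemma mkcode_eq n f g : (forall i k, i < n -> k < n -> f i k = g i k) ->
  mkcode n f = mkcode n g.
Proof.
move=> H; apply/ffunP => i; apply/ffunP => k; rewrite !ffunE; exact: H.
Qed.

Lemma mkcode_inj n f g i k : mkcode n f = mkcode n g -> i < n -> k < n ->
  f i k = g i k.
Proof.
move=> H hi hk.
have := congr1 (fun c : code n => c (Ordinal hi) (Ordinal hk)) H.
by rewrite !ffunE.
Qed.

Lemma sv_sorted N (S : {set 'I_N}) : sorted ltn (sorted_verts S).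
Proof.
apply: (@subseq_sorted _ _ ltn_trans _ (iota 0 N)); last exact: iota_ltn_sorted.
rewrite -val_enum_ord /sorted_verts; apply: map_subseq.
rewrite enumT /enum_mem; exact: filter_subseq.
Qed.

Lemma sv_size N (S : {set 'I_N}) : size (sorted_verts S) = #|S|.
Proof. by rewrite /sorted_verts size_map cardE. Qed.

Lemma sv_all N (S : {set 'I_N}) : all (fun x => x < N) (sorted_verts S).
Proof. apply/allP => x /mapP [y _ ->]; exact: ltn_ord. Qed.

Lemma sv_mem N (S : {set 'I_N}) (i : 'I_N) : (val i \in sorted_verts S) = (i \in S).
Proof. by rewrite /sorted_verts mem_map ?mem_enum //; exact: val_inj. Qed.

Definition setof N (s : seq nat) : {set 'I_N} := [set i : 'I_N | val i \in s].

Lemma sv_setof N s : sorted ltn s -> all (fun x => x < N) s ->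
  sorted_verts (setof N s) = s.
Proof.
move=> so al; apply: (irr_sorted_eq ltn_trans ltnn (sv_sorted _) so) => x.
apply/idP/idP.
  move=> h; have := allP (sv_all (setof N s)) x h => xN.
  by move: h; rewrite -[x]/(val (Ordinal xN)) sv_mem inE.
move=> h; have xN := allP al x h.
by rewrite -[x]/(val (Ordinal xN)) sv_mem inE.
Qed.

Lemma card_setof N s : sorted ltn s -> all (fun x => x < N) s ->
  #|setof N s| = size s.
Proof. by move=> so al; rewrite -sv_size sv_setof. Qed.

Definition Tset n (G : ograph) : {set code n} :=
  [set induced_code n S | S in [set S : {set 'I_(ord G)} | #|S| == n]].

Lemma SnE n G : Sn n G = #|Tset n G|.
Proof. by []. Qed.

Lemma Tset_in n G s : sorted ltn s -> all (fun x => x < ord G) s -> size s = n ->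
  mkcode n (gcode G s) \in Tset n G.
Proof.
move=> so al sz; apply/imsetP; exists (setof (ord G) s).
  by rewrite inE card_setof // sz.
by rewrite induced_codeE sv_setof.
Qed.

Lemma Tset_out n G x : x \in Tset n G -> exists s,
  [/\ sorted ltn s, all (fun y => y < ord G) s, size s = n & x = mkcode n (gcode G s)].
Proof.
case/imsetP => S; rewrite inE => /eqP cS ->; exists (sorted_verts S).
by rewrite sv_size cS; split => //; [exact: sv_sorted | exact: sv_all].
Qed.

Definition cnat n (c : code n) i k :=
  [exists i' : 'I_n, exists k' : 'I_n, [&& val i' == i, val k' == k & c i' k']].

Lemma cnat_ord n (c : code n) (i k : 'I_n) : cnat c i k = c i k.
Proof.
apply/existsP/idP => [[i' /existsP [k' /and3P [/eqP/val_inj -> /eqP/val_inj -> //]]]|h].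
by exists i; apply/existsP; exists k; rewrite !eqxx.
Qed.

Lemma cnat_mk n f i k : i < n -> k < n -> cnat (mkcode n f) i k = f i k.
Proof.
move=> hi hk; rewrite -[i]/(val (Ordinal hi)) -[k]/(val (Ordinal hk)) cnat_ord.
by rewrite !ffunE.
Qed.

Lemma cnat_outl n (c : code n) i k : n <= i -> cnat c i k = false.
Proof.
move=> h; apply/existsP => [[i' /existsP [k' /and3P [/eqP ei _ _]]]].
by move: (ltn_ord i'); rewrite ei ltnNge h.
Qed.

Lemma cnat_outr n (c : code n) i k : n <= k -> cnat c i k = false.
Proof.
move=> h; apply/existsP => [[i' /existsP [k' /and3P [_ /eqP ek _]]]].
by move: (ltn_ord k'); rewrite ek ltnNge h.
Qed.

Lemma mk_cnat n (c : code n) : mkcode n (cnat c) = c.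
Proof. by apply/ffunP => i; apply/ffunP => k; rewrite !ffunE cnat_ord. Qed.

Lemma code_ext n (c d : code n) :
  (forall i k, i < n -> k < n -> cnat c i k = cnat d i k) -> c = d.
Proof. by move=> h; rewrite -(mk_cnat c) -(mk_cnat d); apply: mkcode_eq. Qed.

Definition irrf n (f : nat -> nat -> bool) :=
  forall u, 0 < u -> u < n -> exists i k, [/\ i < u, u <= k, k < n & f i k].

Definition irrc n (c : code n) : bool :=
  [forall u : 'I_n, (0 < u) ==>
     [exists i : 'I_n, exists k : 'I_n, [&& i < u, u <= k & c i k]]].

Lemma irrc_mk n f : irrf n f -> irrc (mkcode n f).
Proof.
move=> h; apply/forallP => u; apply/implyP => u0.
have [i [k [iu uk kn fik]]] := h u u0 (ltn_ord u).
have iN : i < n by apply: ltn_trans iu (ltn_ord u).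
apply/existsP; exists (Ordinal iN); apply/existsP; exists (Ordinal kn).
by rewrite /= iu uk !ffunE.
Qed.

Lemma irrc_cnat n (c : code n) : irrc c -> irrf n (cnat c).
Proof.
move=> /forallP h u u0 un; have := h (Ordinal un); rewrite /= u0 /=.
case/existsP => i /existsP [k /and3P [iu uk cik]].
by exists i, k; split; rewrite ?cnat_ord ?ltn_ord.
Qed.

Lemma Tset_upper n G (x : code n) i k : x \in Tset n G -> k <= i -> cnat x i k = false.
Proof.
case/Tset_out => s [_ _ _ ->] ki.
case: (ltnP i n) => hi; last by rewrite cnat_outl.
case: (ltnP k n) => hk; last by rewrite cnat_outr.
by rewrite cnat_mk // /gcode ltnNge ki.
Qed.

Definition sumf j (f g : nat -> nat -> bool) i k :=
  if k < j then f i k else if j <= i then g (i - j) (k - j) else false.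

Lemma gcode_sum A B s t i k : all (fun x => x < ord A) s -> i < k ->
  k < size s + size t ->
  gcode (osum2 A B) (s ++ map (addn (ord A)) t) i k =
  sumf (size s) (gcode A s) (gcode B t) i k.
Proof.
move=> al ik kn; rewrite /gcode /sumf ik /=.
case: (ltnP k (size s)) => hk.
  have hi : i < size s by apply: ltn_trans hk.
  by rewrite !nth_cat hi hk (allP al) // mem_nth.
have hkt : k - size s < size t by rewrite ltn_subLR.
rewrite !nth_cat [k < _]ltnNge hk /= (nth_map 0) //.
rewrite ltnNge leq_addr /=.
case: (ltnP i (size s)) => hi.
  rewrite ifF //; apply/negbTE; rewrite -ltnNge; exact: (allP al) _ (mem_nth 0 hi).
have hit : i - size s < size t by lia.
rewrite (nth_map 0) // leq_addr !addKn.
have -> : i - size s < k - size s by lia.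
by [].
Qed.

Definition Irr j A : {set code j} := [set x in Tset j A | irrc x].

Definition sumc n j (x : code j) (y : code (n - j)) : code n :=
  mkcode n (fun i k => (i < k) && sumf j (cnat x) (cnat y) i k).

Arguments sumc : clear implicits.

Definition img n j A B : {set code n} :=
  [set sumc n j p.1 p.2 | p in setX (Irr j A) (Tset (n - j) B)].

Lemma sumf_split n j j' f f' g g' : 0 < j <= n -> 0 < j' <= n -> irrf j f -> irrf j' f' ->
  (forall i k, i < k -> k < n -> sumf j f g i k = sumf j' f' g' i k) -> j = j'.
Proof.
move=> /andP[j0 jn] /andP[j0' jn'] hf hf' h.
case: (ltngtP j j') => // hjj.
- have [i [k [iu uk kn fik]]] := hf' j j0 hjj.
  have := h i k (leq_trans iu uk) (leq_trans kn jn'); rewrite /sumf kn fik.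
  by rewrite ltnNge uk /= leqNgt iu.
- have [i [k [iu uk kn fik]]] := hf j' j0' hjj.
  have := h i k (leq_trans iu uk) (leq_trans kn jn); rewrite /sumf kn fik.
  by rewrite ltnNge uk /= leqNgt iu.
Qed.

Lemma sorted_app N s t : sorted ltn s -> sorted ltn t -> all (fun x => x < N) s ->
  sorted ltn (s ++ map (addn N) t).
Proof.
move=> ss st al; rewrite sorted_pairwise; last exact: ltn_trans.
rewrite pairwise_cat pairwise_map -!sorted_pairwise ?ss //=; last exact: ltn_trans.
apply/andP; split.
  apply/allrelP => x y xs /mapP [z _ ->]; have := allP al x xs; lia.
rewrite sorted_pairwise; last by move=> ? ? ? /=; lia.
move: st; rewrite sorted_pairwise; last exact: ltn_trans.
apply: sub_pairwise => a b /=; lia.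
move=> ? ? ? /=; lia.
Qed.

Lemma sumc_eq n j (x : code j) (y : code (n - j)) A B s t :
  j <= n -> all (fun z => z < ord A) s -> size s = j -> size t = n - j ->
  x = mkcode j (gcode A s) -> y = mkcode (n - j) (gcode B t) ->
  sumc n j x y = mkcode n (gcode (osum2 A B) (s ++ map (addn (ord A)) t)).
Proof.
move=> jn al ss st -> -> {x y}; apply: mkcode_eq => i k hi hk.
case: (ltnP i k) => ik /=; last by rewrite /gcode ltnNge ik.
rewrite gcode_sum // ?ss ?st; last by lia.
rewrite /sumf; case: ifP => kj.
  by rewrite cnat_mk //; apply: ltn_trans ik kj.
case: ifP => // ji; rewrite cnat_mk //; lia.
Qed.

Lemma img_sub n j A B : 0 < j <= n -> img n j A B \subset Tset n (osum2 A B).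
Proof.
move=> /andP [j0 jn]; apply/subsetP => c /imsetP [[x y]].
rewrite inE /= => /andP [hx hy] ->; rewrite inE in hx; case/andP: hx => hx _.
have [s [ss als szs ->]] := Tset_out hx.
have [t [st alt szt ->]] := Tset_out hy.
rewrite (sumc_eq (A := A) (B := B) (s := s) (t := t)) //; apply: Tset_in.
- exact: sorted_app.
- rewrite all_cat; apply/andP; split.
    by apply/allP => z zs; have := allP als z zs => /=; lia.
  apply/allP => z /mapP [w wt ->] /=.
  have := allP alt w wt; lia.
- by rewrite size_cat size_map; lia.
Qed.

Lemma sumc_inv n j j' (x : code j) (y : code (n - j)) (x' : code j') (y' : code (n - j')) :
  0 < j <= n -> 0 < j' <= n -> irrc x -> irrc x' ->
  sumc n j x y = sumc n j' x' y' ->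
  j = j' /\ (forall i k, i < k -> k < j -> cnat x i k = cnat x' i k) /\
    (forall i k, i < k -> k < n - j -> cnat y i k = cnat y' i k).
Proof.
move=> hj hj' ix ix' e.
have h : forall i k, i < k -> k < n ->
    sumf j (cnat x) (cnat y) i k = sumf j' (cnat x') (cnat y') i k.
  move=> i k ik kn; have := mkcode_inj e (ltn_trans ik kn) kn; by rewrite ik.
have jj := sumf_split hj hj' (irrc_cnat ix) (irrc_cnat ix') h.
subst j'; split => //; split.
  move=> i k ik kj; have := h i k ik (leq_trans kj (proj2 (andP hj))).
  by rewrite /sumf kj.
move=> i k ik kn; have := h (i + j) (k + j); rewrite /sumf.
rewrite ifF; last by apply/negbTE; lia.
rewrite leq_addl !addnK ifF; last by apply/negbTE; lia.
apply; lia.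
Qed.

Lemma img_card n j A B : 0 < j <= n ->
  #|img n j A B| = #|Irr j A| * #|Tset (n - j) B|.
Proof.
move=> hj; rewrite /img card_in_imset ?cardsX //.
move=> [x y] [x' y'] /setXP [hx hy] /setXP [hx' hy'] /= e.
move: hx hx'; rewrite !inE => /andP [tx ix] /andP [tx' ix'].
have [_ [e1 e2]] := sumc_inv hj hj ix ix' e.
congr pair; apply: code_ext => i k hi hk.
- case: (ltnP i k) => ik; first exact: e1.
  by rewrite (Tset_upper tx) // (Tset_upper tx').
- case: (ltnP i k) => ik; first exact: e2.
  by rewrite (Tset_upper hy) // (Tset_upper hy').
Qed.

Lemma img_disj n j j' A B c : 0 < j <= n -> 0 < j' <= n ->
  c \in img n j A B -> c \in img n j' A B -> j = j'.
Proof.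
move=> hj hj' /imsetP [[x y] /setXP [+ _] ->] /imsetP [[x' y'] /setXP [+ _]].
rewrite !inE => /andP [_ ix] /andP [_ ix'] /= e.
by have [] := sumc_inv hj hj' ix ix' e.
Qed.

Lemma in_bigcup_seq (T : finType) (js : seq nat) (F : nat -> {set T}) c :
  c \in \bigcup_(j <- js) F j -> exists2 j, j \in js & c \in F j.
Proof.
elim: js => [|j js IH]; first by rewrite big_nil inE.
rewrite big_cons => /setUP [h|/IH [j' h1 h2]]; first by exists j; rewrite ?mem_head.
by exists j'; rewrite // inE h1 orbT.
Qed.

Lemma count_sum n A B (js : seq nat) : uniq js -> all (fun j => 0 < j <= n) js ->
  \sum_(j <- js) #|Irr j A| * #|Tset (n - j) B| <= #|Tset n (osum2 A B)|.
Proof.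
move=> uj aj.
suff [e sub] : #|\bigcup_(j <- js) img n j A B| = \sum_(j <- js) #|Irr j A| * #|Tset (n - j) B|
     /\ \bigcup_(j <- js) img n j A B \subset Tset n (osum2 A B).
  by rewrite -e; exact: subset_leq_card.
elim: js uj aj => [|j js IH] /=; first by rewrite !big_nil cards0 sub0set.
move=> /andP [jn uj] /andP [hj aj]; have [e sub] := IH uj aj.
rewrite !big_cons; split; last by rewrite subUset sub img_sub.
rewrite cardsU e img_card //.
suff -> : img n j A B :&: \bigcup_(j0 <- js) img n j0 A B = set0 by rewrite cards0 subn0.
apply/setP => c; rewrite !inE; apply/negbTE/negP => /andP [c1].
case/in_bigcup_seq => j' j'js c2.
have := img_disj hj (allP aj j' j'js) c1 c2; move=> ejj; subst j'.
by rewrite j'js in jn.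
Qed.

Lemma Tset_mono n A B : Tset n B \subset Tset n (osum2 A B).
Proof.
apply/subsetP => x /Tset_out [t [st alt szt ->]].
have -> : mkcode n (gcode B t) =
    mkcode n (gcode (osum2 A B) ([::] ++ map (addn (ord A)) t)).
  apply: mkcode_eq => i k hi hk; case: (ltnP i k) => ik; last by rewrite /gcode ltnNge ik.
  by rewrite gcode_sum //= ?szt // /sumf /= !subn0.
apply: Tset_in => //=.
- by rewrite -[map _ _]cat0s; apply: sorted_app.
- by apply/allP => z /mapP [w wt ->] /=; have := allP alt w wt; lia.
- by rewrite size_map.
Qed.

Lemma Sn_mono n A B : Sn n B <= Sn n (osum2 A B).
Proof. by rewrite !SnE; apply: subset_leq_card; apply: Tset_mono. Qed.

Lemma Sn0 G : 0 < Sn 0 G.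
Proof.
by rewrite SnE; apply/card_gt0P; exists (mkcode 0 (gcode G [::])); apply: Tset_in.
Qed.

Lemma oisoE G H : oiso G H ->
  ord G = ord H /\ forall i j, i < j -> j < ord G -> adj G i j = adj H i j.
Proof.
case/andP => /eqP e /forallP h; split => // i j ij jN.
have iN : i < ord G by apply: ltn_trans ij jN.
have := h (Ordinal iN) => /forallP /(_ (Ordinal jN)) /implyP /(_ ij) /eqP.
by [].
Qed.

Lemma Tset_iso_sub n G H : ord G = ord H ->
  (forall i j, i < j -> j < ord G -> adj G i j = adj H i j) ->
  Tset n G \subset Tset n H.
Proof.
move=> e h; apply/subsetP => x /Tset_out [s [ss als szs ->]].
have -> : mkcode n (gcode G s) = mkcode n (gcode H s).
  apply: mkcode_eq => i k hi hk; rewrite /gcode; case: (ltnP i k) => ik //=.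
  apply: h; last by apply: (allP als); apply: mem_nth; rewrite szs.
  apply: (sorted_ltn_nth ltn_trans) => //; rewrite inE szs //.
apply: Tset_in => //; by rewrite -e.
Qed.

Lemma Sn_iso n G H : oiso G H -> Sn n G = Sn n H.
Proof.
case/oisoE => e h; rewrite !SnE; apply/eqP; rewrite eqn_leq.
rewrite !subset_leq_card //; apply: Tset_iso_sub => //.
by move=> i j ij jN; rewrite h // e.
Qed.

Lemma gapP A : irreducible A -> forall u, u.+1 < ord A ->
  exists i k, [/\ i <= u, u < k & is_edge A i k].
Proof.
move=> hA u hu; move: hA; rewrite /irreducible => /existsPn /(_ (Ordinal (ltnW hu))).
move=> /existsPn /(_ (Ordinal hu)) /=; rewrite ltnSn /=.
case/forallPn => i /forallPn [j]; rewrite negb_imply negb_or -!ltnNge => /and3P [e h1 h2].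
by exists i, j; split.
Qed.

Lemma adjE A a b : a < b -> b < ord A -> adj A a b = is_edge A a b.
Proof. by move=> ab bN; rewrite /is_edge ab bN. Qed.

Lemma edge_lt A a b : is_edge A a b -> a < b /\ b < ord A.
Proof. by case/and3P. Qed.

Lemma oisoI A X : ord A = ord X ->
  (forall i j, i < j -> j < ord A -> adj A i j = adj X i j) -> oiso A X.
Proof.
move=> e h; apply/andP; split; first by apply/eqP.
apply/forallP => i; apply/forallP => j; apply/implyP => ij; apply/eqP.
by apply: h => //; apply: ltn_ord.
Qed.

Lemma inJ_fam A :
  [|| oiso A (J1 (ord A)), oiso A (J2 (ord A)), oiso A (J3 (ord A)),
      oiso A (J4 (ord A)) | oiso A (Lpath (ord A))] -> inJ A.
Proof.
by move=> h; rewrite /inJ; apply/orP; left; apply/orP; left; apply/existsP; exists ord_max.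
Qed.

Lemma inJ_Q1 A : oiso A Q1 -> inJ A.
Proof. by move=> h; rewrite /inJ h orbT. Qed.

Lemma inJ_Q2 A : oiso A Q2 -> inJ A.
Proof. by move=> h; rewrite /inJ h !orbT. Qed.

Lemma Irr_in A n s : sorted ltn s -> all (fun x => x < ord A) s -> size s = n ->
  irrf n (gcode A s) -> mkcode n (gcode A s) \in Irr n A.
Proof. by move=> so al sz ir; rewrite inE Tset_in //= irrc_mk. Qed.

Lemma card_two (T : finType) (S : {set T}) x y :
  x \in S -> y \in S -> x != y -> 1 < #|S|.
Proof.
move=> xS yS xy; have : #|[set x; y]| = 2 by rewrite cards2 xy.
move=> <-; by apply: subset_leq_card; apply/subsetP => z; rewrite !inE => /orP [] /eqP ->.
Qed.

Lemma mk_neq n f g i k : i < n -> k < n -> f i k != g i k -> mkcode n f != mkcode n g.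
Proof. by move=> hi hk ne; apply/eqP => /mkcode_inj /(_ hi hk) e; rewrite e eqxx in ne. Qed.

Definition irr3 A a b c :=
  (is_edge A a b || is_edge A a c) && (is_edge A a c || is_edge A b c).

Lemma tri_in A a b c : a < b -> b < c -> c < ord A -> irr3 A a b c ->
  mkcode 3 (gcode A [:: a; b; c]) \in Irr 3 A.
Proof.
move=> ab bc cN /andP [h1 h2]; apply: Irr_in => //=.
- by rewrite ab bc.
- by rewrite cN (ltn_trans bc cN) (ltn_trans ab (ltn_trans bc cN)).
move=> u u0 u3; rewrite /gcode /=.
have aN : a < ord A by lia.
have bN : b < ord A by lia.
case: u u0 u3 => [//|[|[|//]]] _ _.
- case/orP: h1 => h.
    by exists 0, 1; split => //=; rewrite adjE.
  by exists 0, 2; split => //=; rewrite adjE //; lia.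
- case/orP: h2 => h.
    by exists 0, 2; split => //=; rewrite adjE //; lia.
  by exists 1, 2; split => //=; rewrite adjE.
Qed.

Lemma gcode3 A a b c i k : a < b -> b < c -> c < ord A ->
  gcode A [:: a; b; c] i k =
  if (i, k) == (0, 1) then is_edge A a b else
  if (i, k) == (0, 2) then is_edge A a c else
  if (i, k) == (1, 2) then is_edge A b c else
  (i < k) && adj A (nth 0 [:: a; b; c] i) (nth 0 [:: a; b; c] k).
Proof.
move=> ab bc cN; rewrite /gcode.
case: i => [|[|i]]; case: k => [|[|[|k]]] //=; rewrite adjE //; lia.
Qed.

Lemma two_tri A a b c a' b' c' :
  a < b -> b < c -> c < ord A -> irr3 A a b c ->
  a' < b' -> b' < c' -> c' < ord A -> irr3 A a' b' c' ->
  [|| is_edge A a b != is_edge A a' b', is_edge A a c != is_edge A a' c'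
    | is_edge A b c != is_edge A b' c'] -> 1 < #|Irr 3 A|.
Proof.
move=> ab bc cN i1 ab' bc' cN' i2 d.
apply: (card_two (tri_in ab bc cN i1) (tri_in ab' bc' cN' i2)).
case/or3P: d => d.
- by apply: (mk_neq (i := 0) (k := 1)) => //; rewrite !gcode3.
- by apply: (mk_neq (i := 0) (k := 2)) => //; rewrite !gcode3.
- by apply: (mk_neq (i := 1) (k := 2)) => //; rewrite !gcode3.
Qed.

Section Cases.
Variable A : ograph.
Local Notation N := (ord A).
Local Notation E := (is_edge A).
Hypothesis gap : forall u, u.+1 < N -> exists i k, [/\ i <= u, u < k & E i k].
Variables p1 p2 p3 : bool.
Hypothesis R : forall a b c, a < b -> b < c -> c < N -> irr3 A a b c ->
  [/\ E a b = p1, E a c = p2 & E b c = p3].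

Lemma caseK3 : p1 -> p2 -> p3 -> oiso A (J1 N).
Proof.
move=> h1 h2 h3.
suff all : forall m k, k <= m -> k < N -> forall x, x < k -> E x k.
  by apply: oisoI => // i j ij jN; rewrite adjE //= (all j j).
elim=> [|m IH] k km kN x xk; first by lia.
have [i [j [ik kj eij]]] := gap (u := k.-1) ltac:(lia).
have [ij jN] := edge_lt eij.
have eik : E i k.
  case: (ltngtP j k) => jk; first by lia.
    have [] := R (a := i) (b := k) (c := j) ltac:(lia) jk jN; first by rewrite /irr3 eij orbT.
    by move=> -> _ _.
  by rewrite -jk.
case: (ltngtP x i) => xi.
- have exi : E x i by apply: (IH i) => //; lia.
  have [] := R (a := x) (b := i) (c := k) xi ltac:(lia) kN; first by rewrite /irr3 exi eik orbT.
  by move=> _ -> _.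
- have [] := R (a := i) (b := x) (c := k) xi xk kN; first by rewrite /irr3 eik orbT.
  by move=> _ _ ->.
- by rewrite xi.
Qed.

Lemma caseL3 : p1 -> ~~ p2 -> p3 -> oiso A (Lpath N).
Proof.
move=> h1 h2 h3; apply: oisoI => // i k ik kN /=.
case: eqP => [ek|nk].
  subst k; have [a [b [ai ib eab]]] := gap (u := i) kN.
  have [ab bN] := edge_lt eab.
  case: (ltnP a.+1 b) => hb.
    have [] := R (a := a) (b := a.+1) (c := b) (ltnSn a) hb bN; first by rewrite /irr3 eab orbT.
    by move=> _ e _; rewrite e in eab; rewrite eab in h2.
  have ea : a = i by lia.
  have eb : b = i.+1 by lia.
  by subst; rewrite adjE.
apply/negbTE/negP => aik.
have eik : E i k by rewrite /is_edge ik kN.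
have [] := R (a := i) (b := i.+1) (c := k) (ltnSn i) ltac:(lia) kN; first by rewrite /irr3 eik orbT.
by move=> _ e _; rewrite e in eik; rewrite eik in h2.
Qed.

Lemma caseJ3 : p1 -> p2 -> ~~ p3 -> oiso A (J3 N).
Proof.
move=> h1 h2 h3.
have all0 : forall m k, k <= m -> 0 < k -> k < N -> E 0 k.
  elim=> [|m IH] k km k0 kN; first by lia.
  have [i [j [ik kj eij]]] := gap (u := k.-1) ltac:(lia).
  have [ij jN] := edge_lt eij.
  case: (posnP i) => i0.
    subst i; case: (ltngtP j k) => jk; first by lia.
      have [] := R (a := 0) (b := k) (c := j) k0 jk jN; first by rewrite /irr3 eij orbT.
      by move=> -> _ _.
    by rewrite -jk.
  have e0i : E 0 i by apply: (IH i) => //; lia.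
  have [] := R (a := 0) (b := i) (c := j) i0 ij jN; first by rewrite /irr3 e0i eij !orbT.
  by move=> _ _ e; rewrite e in eij; rewrite eij in h3.
apply: oisoI => // i k ik kN /=.
case: (posnP i) => i0.
  by subst i; rewrite adjE //; apply: (all0 k).
apply/negbTE/negP => aik.
have eik : E i k by rewrite /is_edge ik kN.
have e0i : E 0 i by apply: (all0 i) => //; lia.
have [] := R (a := 0) (b := i) (c := k) i0 ik kN; first by rewrite /irr3 e0i eik !orbT.
by move=> _ _ e; rewrite e in eik; rewrite eik in h3.
Qed.

Lemma caseJ4 : ~~ p1 -> p2 -> p3 -> oiso A (J4 N).
Proof.
move=> h1 h2 h3.
have allN : forall d i, i < N.-1 -> N.-1 - i <= d -> E i N.-1.
  elim=> [|d IH] i iN id; first by lia.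
  have [a [b [ai ib eab]]] := gap (u := i) ltac:(lia).
  have [ab bN] := edge_lt eab.
  case: (ltngtP b N.-1) => bN1.
  - have ebN : E b N.-1 by apply: IH => //; lia.
    have [] := R (a := a) (b := b) (c := N.-1) ab bN1 ltac:(lia); first by rewrite /irr3 eab ebN !orbT.
    by move=> e _ _; rewrite e in eab; rewrite eab in h1.
  - by lia.
  - subst b; case: (ltngtP a i) => ai'.
    + have [] := R (a := a) (b := i) (c := N.-1) ai' iN bN; first by rewrite /irr3 eab !orbT.
      by move=> _ _ ->.
    + by lia.
    + by subst.
apply: oisoI => // i k ik kN /=.
case: eqP => [ek|nk].
  by subst k; rewrite adjE //; apply: (allN N) => //; lia.
apply/negbTE/negP => aik.
have eik : E i k by rewrite /is_edge ik kN.
have ekN : E k N.-1 by apply: (allN N) => //; lia.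
have [] := R (a := i) (b := k) (c := N.-1) ik ltac:(lia) ltac:(lia); first by rewrite /irr3 eik ekN !orbT.
by move=> e _ _; rewrite e in eik; rewrite eik in h1.
Qed.

End Cases.

Lemma inJ_J1 A : oiso A (J1 (ord A)) -> inJ A.
Proof. by move=> h; apply: inJ_fam; rewrite h. Qed.
Lemma inJ_J2 A : oiso A (J2 (ord A)) -> inJ A.
Proof. by move=> h; apply: inJ_fam; rewrite h !orbT. Qed.
Lemma inJ_J3 A : oiso A (J3 (ord A)) -> inJ A.
Proof. by move=> h; apply: inJ_fam; rewrite h !orbT. Qed.
Lemma inJ_J4 A : oiso A (J4 (ord A)) -> inJ A.
Proof. by move=> h; apply: inJ_fam; rewrite h !orbT. Qed.
Lemma inJ_L A : oiso A (Lpath (ord A)) -> inJ A.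
Proof. by move=> h; apply: inJ_fam; rewrite h !orbT. Qed.

Lemma quad_J A a b c d : a < b -> b < c -> c < d -> d < ord A -> is_edge A a d ->
  mkcode 4 (gcode A [:: a; b; c; d]) \in Irr 4 A.
Proof.
move=> ab bc cd dN ead; apply: Irr_in.
- by rewrite /= ab bc cd.
- by apply/allP => x; rewrite !inE => /or4P [] /eqP ->; lia.
- by [].
move=> u u0 u4; exists 0, 3; split => //; try lia.
by rewrite /gcode /= adjE //; lia.
Qed.

Lemma quad_Q1 A a b c d : a < b -> b < c -> c < d -> d < ord A ->
  is_edge A a c -> is_edge A b d ->
  mkcode 4 (gcode A [:: a; b; c; d]) \in Irr 4 A.
Proof.
move=> ab bc cd dN eac ebd; apply: Irr_in.
- by rewrite /= ab bc cd.
- by apply/allP => x; rewrite !inE => /or4P [] /eqP ->; lia.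
- by [].
move=> u u0 u4; case: u u0 u4 => [//|[|[|[|//]]]] _ _.
- by exists 0, 2; split => //; rewrite /gcode /= adjE //; lia.
- by exists 0, 2; split => //; rewrite /gcode /= adjE //; lia.
- by exists 1, 3; split => //; rewrite /gcode /= adjE //; lia.
Qed.

Lemma gcode4_03 A a b c d : a < d -> d < ord A ->
  gcode A [:: a; b; c; d] 0 3 = is_edge A a d.
Proof. by move=> ad dN; rewrite /gcode /= adjE. Qed.

Lemma gcode4_12 A a b c d : b < c -> c < ord A ->
  gcode A [:: a; b; c; d] 1 2 = is_edge A b c.
Proof. by move=> ad dN; rewrite /gcode /= adjE. Qed.

Section CaseJ2.
Variable A : ograph.
Local Notation N := (ord A).
Local Notation E := (is_edge A).
Hypothesis gap : forall u, u.+1 < N -> exists i k, [/\ i <= u, u < k & E i k].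
Hypothesis R : forall a b c, a < b -> b < c -> c < N -> irr3 A a b c ->
  [/\ E a b = false, E a c = true & E b c = false].

Lemma M1 a b c : a < b -> b < c -> E a b -> E b c -> False.
Proof.
move=> ab bc eab ebc; have [_ cN] := edge_lt ebc.
have [] := R ab bc cN; first by rewrite /irr3 eab ebc !orbT.
by move=> e _ _; rewrite e in eab.
Qed.

Lemma M2 a b c : a < b -> b < c -> E a b -> E a c -> False.
Proof.
move=> ab bc eab eac; have [_ cN] := edge_lt eac.
have [] := R ab bc cN; first by rewrite /irr3 eac !orbT.
by move=> e _ _; rewrite e in eab.
Qed.

Lemma M3 a b c : a < b -> b < c -> E a c -> E b c -> False.
Proof.
move=> ab bc eac ebc; have [_ cN] := edge_lt eac.
have [] := R ab bc cN; first by rewrite /irr3 eac !orbT.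
by move=> _ _ e; rewrite e in ebc.
Qed.

Lemma noadj i k : i < k -> k < N -> ~ E i k -> adj A i k = false.
Proof. by move=> ik kN ne; rewrite adjE //; apply/negbTE/negP. Qed.

Lemma caseJ2 : 2 < N -> inJ A \/ (0 < #|Irr 3 A| /\ 1 < #|Irr 4 A|).
Proof.
move=> N3.
case: (boolP (E 0 N.-1)) => e0N.
- have t3 : 0 < #|Irr 3 A|.
    apply/card_gt0P; exists (mkcode 3 (gcode A [:: 0; 1; N.-1])).
    by apply: tri_in => //; [lia | lia | rewrite /irr3 e0N !orbT].
  case: (classic (exists a b, [/\ 0 < a, a < b, b < N.-1 & E a b])) =>
      [[a [b [a0 ab bN eab]]] | nob].
  + case: (ltngtP N 4) => N4.
    * by lia.
    * right; split => //.
      have q := quad_J (A := A) (a := 0) (b := a) (c := b) (d := N.-1) a0 ab bN ltac:(lia) e0N.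
      case: (boolP (E 1 2)) => e12.
        have j := quad_J (A := A) (a := 0) (b := 1) (c := 3) (d := N.-1) isT isT ltac:(lia) ltac:(lia) e0N.
        apply: (card_two q j); apply: (mk_neq (i := 1) (k := 2)) => //.
        rewrite !gcode4_12 //; try lia.
        rewrite eab; apply/negP => e13; exact: (M2 (a := 1) (b := 2) (c := 3)).
      have j := quad_J (A := A) (a := 0) (b := 1) (c := 2) (d := N.-1) isT isT ltac:(lia) ltac:(lia) e0N.
      apply: (card_two q j); apply: (mk_neq (i := 1) (k := 2)) => //.
      by rewrite !gcode4_12 //; try lia; rewrite eab.
    * left; apply: inJ_Q2; apply: oisoI => //.
      have ea : a = 1 by lia.
      have eb : b = 2 by lia.
      subst a b; rewrite N4 /= in e0N.
      move=> i k ik; rewrite N4 => kN.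
      case: k kN ik => [|[|[|[|k]]]] // _; case: i => [|[|[|i]]] // _ /=.
      - by apply: noadj; rewrite ?N4 // => e; apply: (M2 (a := 0) (b := 1) (c := 3)).
      - by apply: noadj; rewrite ?N4 // => e; apply: (M2 (a := 0) (b := 2) (c := 3)).
      - by rewrite adjE ?N4.
      - by rewrite adjE ?N4.
      - by apply: noadj; rewrite ?N4 // => e; apply: (M3 (a := 0) (b := 1) (c := 3)).
      - by apply: noadj; rewrite ?N4 // => e; apply: (M3 (a := 0) (b := 2) (c := 3)).
  + left; apply: inJ_J2; apply: oisoI => // i k ik kN /=.
    case: (posnP i) => i0; case: (eqVneq k N.-1) => kN1 /=.
    * by subst; rewrite adjE.
    * apply: noadj => // e; subst i.
      by apply: (M2 (a := 0) (b := k) (c := N.-1)) => //; lia.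
    * apply: noadj => // e; subst k.
      by apply: (M3 (a := 0) (b := i) (c := N.-1)) => //; lia.
    * apply: noadj => // e; apply: nob; exists i, k; split => //; lia.
- have [i [p [i0 p0 e0p]]] := gap (u := 0) ltac:(lia).
  have ei : i = 0 by lia.
  subst i; have [_ pN] := edge_lt e0p.
  have pN1 : p < N.-1.
    case: (ltngtP p N.-1) => //; first by lia.
    by move=> ep; rewrite -ep e0p in e0N.
  have [a [b [ap pb eab]]] := gap (u := p) ltac:(lia).
  have [ab bN] := edge_lt eab.
  have a0 : 0 < a.
    case: (posnP a) => // ea; subst a.
    by case: (M2 (a := 0) (b := p) (c := b)).
  have ap' : a < p.
    case: (ltngtP a p) => //; first by lia.
    by move=> ea; subst a; case: (M1 (a := 0) (b := p) (c := b)).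
  have t3 : 0 < #|Irr 3 A|.
    apply/card_gt0P; exists (mkcode 3 (gcode A [:: 0; a; p])).
    by apply: tri_in => //; rewrite /irr3 e0p !orbT.
  have q := quad_Q1 a0 ap' pb bN e0p eab.
  have q03 : gcode A [:: 0; a; p; b] 0 3 = false.
    rewrite gcode4_03 //; first (apply/negP => e; exact: (M2 (a := 0) (b := p) (c := b))).
    by lia.
  case: (leqP b 3) => b3.
  + have ea : a = 1 by lia.
    have ep : p = 2 by lia.
    have eb : b = 3 by lia.
    subst a p b.
    case: (ltngtP N 4) => N4; first by lia.
      have [i [j [i3 j3 eij]]] := gap (u := 3) ltac:(lia).
      have [ij jN] := edge_lt eij.
      case: i i3 ij eij => [|[|[|[|//]]]] _ ij eij.
      * by exfalso; apply: (M2 (a := 0) (b := 2) (c := j) isT _ e0p eij); lia.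
      * by exfalso; apply: (M2 (a := 1) (b := 3) (c := j) isT _ eab eij); lia.
      * by exfalso; apply: (M1 (a := 0) (b := 2) (c := j) isT _ e0p eij); lia.
      * by exfalso; apply: (M1 (a := 1) (b := 3) (c := j) isT _ eab eij); lia.
    left; apply: inJ_Q1; apply: oisoI => //.
    move=> i k ik; rewrite N4 => kN.
    case: k kN ik => [|[|[|[|k]]]] // _; case: i => [|[|[|i]]] // _ /=.
    - rewrite (@noadj 0 1) //; try (by rewrite N4); move=> e.
      by apply: (M2 (a := 0) (b := 1) (c := 2)).
    - by rewrite adjE ?N4.
    - rewrite (@noadj 1 2) //; try (by rewrite N4); move=> e.
      by apply: (M3 (a := 0) (b := 1) (c := 2)).
    - by rewrite adjE ?N4 ?eab.
    - rewrite (@noadj 2 3) //; try (by rewrite N4); move=> e.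
      by apply: (M3 (a := 1) (b := 2) (c := 3)).
  + right; split => //.
    case: (ltnP 1 a) => a1.
      have j := quad_J (A := A) (a := 0) (b := 1) (c := a) (d := p) isT a1 ap' pN e0p.
      apply: (card_two q j); apply: (mk_neq (i := 0) (k := 3)) => //.
      rewrite q03 gcode4_03 ?e0p ?eab //; lia.
    have ea : a = 1 by lia.
    subst a; case: (ltnP 2 p) => p2.
      have j := quad_J (A := A) (a := 0) (b := 1) (c := 2) (d := p) isT isT p2 pN e0p.
      apply: (card_two q j); apply: (mk_neq (i := 0) (k := 3)) => //.
      rewrite q03 gcode4_03 ?e0p ?eab //; lia.
    have ep : p = 2 by lia.
    subst p.
    have j := quad_J (A := A) (a := 1) (b := 2) (c := 3) (d := b) isT isT b3 bN eab.
    apply: (card_two q j); apply: (mk_neq (i := 0) (k := 3)) => //.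
    rewrite q03 gcode4_03 ?e0p ?eab //; lia.
Qed.

End CaseJ2.

Lemma small_inJ A : irreducible A -> ord A <= 2 -> inJ A.
Proof.
move=> hA N2; apply: inJ_J1; apply: oisoI => // i k ik kN /=.
have ei : i = 0 by lia.
have ek : k = 1 by lia.
subst i k; have [i [k [i0 k0 e]]] := gapP hA (u := 0) ltac:(lia).
have [ik' kN'] := edge_lt e.
have ei : i = 0 by lia.
have ek : k = 1 by lia.
by subst; rewrite adjE.
Qed.

Lemma exists_tri A : irreducible A -> 2 < ord A ->
  exists a b c, [/\ a < b, b < c, c < ord A & irr3 A a b c].
Proof.
move=> hA N3; have [i [j [i0 j0 e]]] := gapP hA (u := 0) ltac:(lia).
have ei : i = 0 by lia.
subst i; have [_ jN] := edge_lt e.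
case: (ltnP 1 j) => j1.
  by exists 0, 1, j; split => //; rewrite /irr3 e !orbT.
have ej : j = 1 by lia.
subst j; have [i [k [i1 k1 e']]] := gapP hA (u := 1) ltac:(lia).
have [ik kN] := edge_lt e'.
case: (posnP i) => i00.
  by subst i; exists 0, 1, k; split => //; rewrite /irr3 e' !orbT.
have ei : i = 1 by lia.
by subst i; exists 0, 1, k; split => //; rewrite /irr3 e e' !orbT.
Qed.

Lemma block_bound A : irreducible A -> ~~ inJ A ->
  [/\ 1 <= #|Irr 1 A|, 1 <= #|Irr 2 A| &
      (2 <= #|Irr 3 A|) \/ (1 <= #|Irr 3 A| /\ 2 <= #|Irr 4 A|)].
Proof.
move=> hA nJ; have gap := gapP hA.
have N3 : 2 < ord A.
  by case: (ltnP 2 (ord A)) => // N2; rewrite small_inJ in nJ.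
split.
- apply/card_gt0P; exists (mkcode 1 (gcode A [:: 0])); apply: Irr_in => //=.
  + by rewrite andbT; lia.
  + by move=> u u0 u1; lia.
- have [i [k [i0 k0 e]]] := gap 0 ltac:(lia).
  have ei : i = 0 by lia.
  subst i; have [_ kN] := edge_lt e.
  apply/card_gt0P; exists (mkcode 2 (gcode A [:: 0; k])); apply: Irr_in => //=.
  + by rewrite k0.
  + by rewrite kN andbT; lia.
  + move=> u u0 u2; have eu : u = 1 by lia.
    by subst u; exists 0, 1; split => //; rewrite /gcode /= adjE.
case: (classic (exists a b c a' b' c', [/\ a < b, b < c, c < ord A, irr3 A a b c &
   [/\ a' < b', b' < c', c' < ord A, irr3 A a' b' c' &
   [|| is_edge A a b != is_edge A a' b', is_edge A a c != is_edge A a' c'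
    | is_edge A b c != is_edge A b' c']]])) => [|nP].
  move=> [a [b [c [a' [b' [c' [ab bc cN i1 [ab' bc' cN' i2 d]]]]]]]].
  by left; apply: (two_tri ab bc cN i1 ab' bc' cN' i2 d).
have [a0 [b0 [c0 [ab0 bc0 cN0 i0]]]] := exists_tri hA N3.
have R : forall a b c, a < b -> b < c -> c < ord A -> irr3 A a b c ->
    [/\ is_edge A a b = is_edge A a0 b0, is_edge A a c = is_edge A a0 c0
      & is_edge A b c = is_edge A b0 c0].
  move=> a b c ab bc cN i1.
  case: (eqVneq (is_edge A a b) (is_edge A a0 b0)) => e1;
  case: (eqVneq (is_edge A a c) (is_edge A a0 c0)) => e2;
  case: (eqVneq (is_edge A b c) (is_edge A b0 c0)) => e3 //;
  by exfalso; apply: nP; exists a, b, c, a0, b0, c0; split => //; split => //;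
     rewrite ?e1 ?e2 ?e3 ?orbT.
move: R i0; rewrite /irr3.
case: (is_edge A a0 b0); case: (is_edge A a0 c0); case: (is_edge A b0 c0) => R i0 //.
- by rewrite inJ_J1 // in nJ; apply: (caseK3 gap R).
- by rewrite inJ_J3 // in nJ; apply: (caseJ3 gap R).
- by rewrite inJ_L // in nJ; apply: (caseL3 gap R).
- by rewrite inJ_J4 // in nJ; apply: (caseJ4 gap R).
- by case: (caseJ2 gap R N3) => [h|h]; [rewrite h in nJ | right].
Qed.

Lemma main_ind bs : all irreducible bs -> forall n, 0 < n ->
  n <= count (fun B => ~~ inJ B) bs -> 2 ^ n.-1 <= Sn n (osum bs).
Proof.
elim: bs => [|B bs IH] /=; first by move=> _ n n0 /(leq_trans n0); rewrite ltnn.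
move=> /andP [iB ibs] n n0; have IH' := IH ibs.
case: (boolP (inJ B)) => hJ /=.
  rewrite add0n => hn; apply: leq_trans (IH' n n0 hn) _; exact: Sn_mono.
move=> hn.
have [c1 c2 c34] := block_bound iB hJ.
set R := osum bs.
have IHR : forall m, 0 < m -> m <= n.-1 -> 2 ^ m.-1 <= Sn m R.
  move=> m m0 mn; apply: IH' => //; lia.
have S0 := Sn0 R.
case: n n0 hn IHR => [//|[|[|[|[|m]]]]] _ hn IHR.
- have key := @count_sum 1 B R [:: 1] isT isT.
  rewrite big_cons big_nil addn0 -!SnE in key; apply: leq_trans key.
  by rewrite muln_gt0 c1.
- have key := @count_sum 2 B R [:: 1; 2] isT isT.
  rewrite !big_cons big_nil addn0 -!SnE in key; apply: leq_trans key.
  have h1 : 1 <= Sn 1 R := IHR 1 isT isT.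
  change (2 <= #|Irr 1 B| * Sn 1 R + #|Irr 2 B| * Sn 0 R).
  have := leq_mul c1 h1; have := leq_mul c2 S0; lia.
- have key := @count_sum 3 B R [:: 1; 2; 3] isT isT.
  rewrite !big_cons big_nil addn0 -!SnE in key; apply: leq_trans key.
  have h1 : 1 <= Sn 1 R := IHR 1 isT isT.
  have h2 : 2 <= Sn 2 R := IHR 2 isT isT.
  have c3 : 0 < #|Irr 3 B| by case: c34 => [h|[h _]] //; apply: ltnW.
  change (4 <= #|Irr 1 B| * Sn 2 R + (#|Irr 2 B| * Sn 1 R + #|Irr 3 B| * Sn 0 R)).
  have := leq_mul c1 h2; have := leq_mul c2 h1; have := leq_mul c3 S0; lia.
- have key := @count_sum 4 B R [:: 1; 2; 3; 4] isT isT.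
  rewrite !big_cons big_nil addn0 -!SnE in key; apply: leq_trans key.
  have h1 : 1 <= Sn 1 R := IHR 1 isT isT.
  have h2 : 2 <= Sn 2 R := IHR 2 isT isT.
  have h3 : 4 <= Sn 3 R := IHR 3 isT isT.
  change (8 <= #|Irr 1 B| * Sn 3 R + (#|Irr 2 B| * Sn 2 R + (#|Irr 3 B| * Sn 1 R + #|Irr 4 B| * Sn 0 R))).
  have e1 := leq_mul c1 h3; have e2 := leq_mul c2 h2.
  case: c34 => [c3|[c3 c4]].
    have := leq_mul c3 h1; have := leq_mul (leq0n #|Irr 4 B|) S0; lia.
  have := leq_mul c3 h1; have := leq_mul c4 S0; lia.
- have key := @count_sum m.+4.+1 B R [:: 1; 2; 3; 4] isT isT.
  rewrite !big_cons big_nil addn0 -!SnE in key; apply: leq_trans key.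
  have h1 : 2 ^ m <= Sn m.+1 R := IHR m.+1 isT ltac:(simpl; lia).
  have h2 : 2 ^ m.+1 <= Sn m.+2 R := IHR m.+2 isT ltac:(simpl; lia).
  have h3 : 2 ^ m.+2 <= Sn m.+3 R := IHR m.+3 isT ltac:(simpl; lia).
  have h4 : 2 ^ m.+3 <= Sn m.+4 R := IHR m.+4 isT ltac:(simpl; lia).
  change (2 ^ m.+4 <= #|Irr 1 B| * Sn m.+4 R + (#|Irr 2 B| * Sn m.+3 R +
     (#|Irr 3 B| * Sn m.+2 R + #|Irr 4 B| * Sn m.+1 R))).
  have e1 := leq_mul c1 h4; have e2 := leq_mul c2 h3.
  case: c34 => [c3|[c3 c4]].
    have e3 := leq_mul c3 h2; have e4 := leq_mul (leq0n #|Irr 4 B|) h1.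
    rewrite !expnS in e1 e2 e3 e4 *; lia.
  have e3 := leq_mul c3 h2; have e4 := leq_mul c4 h1.
  rewrite !expnS in e1 e2 e3 e4 *; lia.
Qed.

Unset Implicit Arguments.

Theorem lemma19 (k : nat) (G : ograph) (bs : seq ograph) :
  block_decomposition G bs ->
  k <= count (fun B => ~~ inJ B) bs ->
  forall n : nat, 0 < n -> n <= k -> 2 ^ n.-1 <= Sn n G.
Proof.
case/andP => ibs iso hk n n0 nk; rewrite (Sn_iso n iso).
apply: main_ind => //; exact: leq_trans nk hk.
Qed.
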